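(* Let $p\in(0,1)$, let $(\mathcal M,d,0)$ be a pointed $p$-metric space with $\mathcal M=\{0,x,y,z\}$ (four distinct points) and $\mathcal N=\{0,x,y\}$. Assume that none of the $p$-triangle inequalities among the distances between $0,x,y$ is an equality. Let $d'$ be the function on $\mathcal M\times\mathcal M$ with $d'=d$ on $\mathcal N\times\mathcal N$ and, for every bijection $u:\{1,2,3\}\to\mathcal N$, \[d'(u(1),z)=\Big(\frac{d^p(u(2),u(1))+d^p(u(3),u(1))-d^p(u(2),u(3))}{2}\Big)^{1/p}.\] Then $d'$ is a $p$-metric on $\mathcal M$ and, for $\mathcal M'=(\mathcal M,d',0)$ and all $a,b\in\mathbb R$, \[\|a\delta(x)+b\delta(y)\|_{\mathcal F_p(\mathcal M')}\le\|a\delta(x)+b\delta(y)\|_{\mathcal F_p(\mathcal M)}.\] Moreover, writing $d_x=d(x,0)$, $d_y=d(y,0)$, $d_{xy}=d(x,y)$, \[\|a\delta(x)+b\delta(y)\|_{\mathcal F_p(\mathcal M')}^p=d_x^p\tfrac{|a+b|^p+|a|^p-|b|^p}{2}+d_y^p\tfrac{|a+b|^p+|b|^p-|a|^p}{2}+d_{xy}^p\tfrac{|a|^p+|b|^p-|a+b|^p}{2},\] and $\|a\delta(x)+b\delta(y)\|_{\mathcal F_p(\mathcal M')}=\|a\delta(x)+b\delta(y)\|_{\mathcal F_p(\mathcal N)}$ if and only if $ab=0$ or $a=-b$.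
   Context: A $p$-metric space is a set with $d$ such that $d^p$ is a metric; pointed means a distinguished point $0$. A $p$-Banach space is a complete vector space with a $p$-norm. $\delta(x)$ is evaluation at $x$ on real functions vanishing at $0$, and $\mathcal F_p(\mathcal M)$ is the completion of $\mathrm{span}\{\delta(x)\}$ under $\|\sum a_i\delta(x_i)\|=\sup\|\sum a_if(x_i)\|_Y$ over $p$-Banach $Y$ and $1$-Lipschitz $f:\mathcal M\to Y$ with $f(0)=0$; $\mathcal N$ carries the restriction of $d$ and base point $0$. The $p$-triangle inequalities among $0,x,y$ are $d^p(u,w)\le d^p(u,v)+d^p(v,w)$ for $\{u,v,w\}=\{0,x,y\}$. *)

(* Defs.v *)
From HB Require Import structures.
From mathcomp Require Import all_boot all_order all_algebra.
From mathcomp Require Import all_classical all_reals.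
From mathcomp Require Import exp.
Set Implicit Arguments. Unset Strict Implicit. Unset Printing Implicit Defensive.
Import Order.TTheory GRing.Theory Num.Theory.
Local Open Scope classical_set_scope.
Local Open Scope ring_scope.

Section Defs.
Variable R : realType.

Definition is_pmetric (T : Type) (p : R) (d : T -> T -> R) : Prop :=
  (forall u v, 0 <= d u v) /\
  (forall u v, d u v = 0 <-> u = v) /\
  (forall u v, d u v = d v u) /\
  (forall u v w, d u w `^ p <= d u v `^ p + d v w `^ p).

Definition is_pnorm (V : lmodType R) (p : R) (nrm : V -> R) : Prop :=
  (forall v, 0 <= nrm v) /\
  (forall v, nrm v = 0 <-> v = 0) /\
  (forall (k : R) v, nrm (k *: v) = `|k| * nrm v) /\
  (forall u v, nrm (u + v) `^ p <= nrm u `^ p + nrm v `^ p).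

Definition pn_complete (V : lmodType R) (nrm : V -> R) : Prop :=
  forall s : nat -> V,
    (forall e : R, 0 < e -> exists N, forall m n, (N <= m)%N -> (N <= n)%N ->
        nrm (s m - s n) < e) ->
    exists l : V, forall e : R, 0 < e -> exists N, forall n, (N <= n)%N ->
        nrm (s n - l) < e.

(* Norm in F_p(S) (S a pointed p-metric subspace of (T,d) with base point o,
   o \in S) of the finitely supported molecule sum_i a_i delta(x_i), x_i in S:
   the supremum over all p-Banach spaces Y and all 1-Lipschitz f : S -> Y with
   f o = 0 of || sum_i a_i f(x_i) ||_Y.  (Values of f outside S are irrelevant.) *)
Definition free_pnorm (T : Type) (p : R) (d : T -> T -> R) (S : set T) (o : T)
    (mol : seq (R * T)) : R :=
  sup [set r | exists (V : lmodType R) (nrm : V -> R) (f : T -> V),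
         [/\ is_pnorm p nrm, pn_complete nrm, f o = 0,
             (forall u v, S u -> S v -> nrm (f u - f v) <= d u v) &
             r = nrm (\sum_(c <- mol) c.1 *: f c.2)]].

Definition gromov_ext (T : Type) (p : R) (d : T -> T -> R) (u1 u2 u3 : T) : R :=
  ((d u2 u1 `^ p + d u3 u1 `^ p - d u2 u3 `^ p) / 2) `^ (p^-1).

Definition dz (T : eqType) (p : R) (d : T -> T -> R) (o x y w : T) : R :=
  if w == x then gromov_ext p d x o y
  else if w == y then gromov_ext p d y o x
  else gromov_ext p d o x y.

Definition dprime (T : eqType) (p : R) (d : T -> T -> R) (o x y z : T)
    (u v : T) : R :=
  if u == z then (if v == z then 0 else dz p d o x y v)
  else if v == z then dz p d o x y u
  else d u v.

End Defs.

(* Main.v *)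
Require Import Defs.
From HB Require Import structures.
From mathcomp Require Import all_boot all_order all_algebra.
From mathcomp Require Import all_classical all_reals.
From mathcomp Require Import topology normedtype sequences exp.
From mathcomp Require Import ring lra.
Import Order.TTheory GRing.Theory Num.Theory.
Import numFieldNormedType.Exports.
Local Open Scope classical_set_scope.
Local Open Scope ring_scope.
Set Implicit Arguments. Unset Strict Implicit. Unset Printing Implicit Defensive.
Section Pw.
Variable R : realType.
Variable p : R.
Hypothesis p0 : 0 < p.
Hypothesis p1 : p < 1.

Lemma pinv_ge0 : 0 <= p^-1. Proof. by rewrite invr_ge0 ltW. Qed.
Lemma pinv_gt0 : 0 < p^-1. Proof. by rewrite invr_gt0. Qed.

Lemma powRVK (x : R) : 0 <= x -> (x `^ p^-1) `^ p = x.
Proof. by move=> x0; rewrite -powRrM mulVf ?gt_eqF // powRr1. Qed.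

Lemma powRKV (x : R) : 0 <= x -> (x `^ p) `^ p^-1 = x.
Proof. by move=> x0; rewrite -powRrM mulfV ?gt_eqF // powRr1. Qed.

Lemma le_powRV (r F : R) : 0 <= r -> r `^ p <= F -> r <= F `^ p^-1.
Proof.
move=> r0 h; rewrite -(powRKV r0).
by apply: (ge0_ler_powR pinv_ge0) => //; rewrite nnegrE ?powR_ge0 // (le_trans _ h) ?powR_ge0.
Qed.

Lemma ler_powRp (x y : R) : 0 <= x -> x <= y -> x `^ p <= y `^ p.
Proof.
move=> x0 xy; apply: (ge0_ler_powR (ltW p0)) => //; rewrite nnegrE //.
exact: le_trans xy.
Qed.

Lemma ltr_powRV (x y : R) : 0 <= x -> x < y -> x `^ p^-1 < y `^ p^-1.
Proof.
move=> x0 xy; apply: (gt0_ltr_powR pinv_gt0) => //; rewrite nnegrE //.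
exact: le_trans (ltW xy).
Qed.

Lemma ler_powRV (x y : R) : 0 <= x -> x <= y -> x `^ p^-1 <= y `^ p^-1.
Proof.
move=> x0 xy; apply: (ge0_ler_powR pinv_ge0) => //; rewrite nnegrE //.
exact: le_trans xy.
Qed.

Lemma le_powR_rev (r t : R) : 0 <= r -> 0 <= t -> r `^ p <= t `^ p -> r <= t.
Proof.
move=> r0 t0 h; rewrite -(powRKV r0) -(powRKV t0).
by apply: ler_powRV => //; apply: powR_ge0.
Qed.

Lemma powR0p : 0 `^ p = 0. Proof. by rewrite powR0 // gt_eqF. Qed.
Lemma powR1p : 1 `^ p = 1. Proof. by rewrite powR1. Qed.

Lemma bernoulli_p (s : R) : 0 <= s -> (1 + s) `^ p <= 1 + p * s.
Proof.
move=> s0.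
have h := @conjugate_powR _ ((1 + s) `^ p) 1 (p^-1) ((1 - p)^-1) (powR_ge0 _ _) ler01
  pinv_gt0 ltac:(by rewrite invr_gt0 subr_gt0) ltac:(by rewrite !invrK addrC subrK).
rewrite mulr1 powRKV ?addr_ge0 // powR1 !invrK in h.
apply: (le_trans h); lra.
Qed.

Lemma key_powR (x y : R) : 0 <= x -> x <= y -> (x + y) `^ p <= y `^ p + p * x `^ p.
Proof.
move=> x0 xy.
have [y0|y0] := eqVneq y 0.
  have -> : x = 0 by apply/eqP; rewrite eq_le x0 -y0 xy.
  by rewrite y0 addr0 powR0p mulr0 addr0.
have yp : 0 < y by rewrite lt_def y0 (le_trans x0 xy).
pose s := x / y.
have s0 : 0 <= s by rewrite divr_ge0 // ltW.
have s1 : s <= 1 by rewrite ler_pdivrMr // mul1r.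
have e1 : x + y = y * (1 + s) by rewrite /s mulrDr mulr1 mulrCA divff // mulr1 addrC.
have e2 : x = y * s by rewrite /s mulrCA divff // mulr1.
clearbody s; rewrite e1 e2.
rewrite (powRM _ (ltW yp) (addr_ge0 ler01 s0)) (powRM _ (ltW yp) s0).
have hs : s <= s `^ p.
  have [->|sn0] := eqVneq s 0; first by rewrite powR0p.
  by apply: ger1_powR; [rewrite lt_def sn0 s0 s1 | exact: ltW].
have yp0 : 0 <= y `^ p := powR_ge0 _ _.
have := bernoulli_p s0 => hb.
have h2 : (1 + s) `^ p <= 1 + p * s `^ p.
  by apply: (le_trans hb); rewrite lerD2l ler_wpM2l // ltW.
by apply: le_trans (ler_wpM2l yp0 h2) _; rewrite mulrDr mulr1 mulrCA.
Qed.

Lemma subadd_powR (x y : R) : 0 <= x -> 0 <= y -> (x + y) `^ p <= x `^ p + y `^ p.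
Proof.
move=> x0 y0.
have hx : p * x `^ p <= x `^ p by rewrite ler_piMl ?powR_ge0 // ltW.
have hy : p * y `^ p <= y `^ p by rewrite ler_piMl ?powR_ge0 // ltW.
have [xy|yx] := leP x y.
  have := key_powR x0 xy; lra.
have := key_powR y0 (ltW yx); rewrite addrC; lra.
Qed.

Lemma strict_powR (x y m : R) : 0 <= m -> m <= x -> m <= y ->
  (x + y) `^ p + (1 - p) * m `^ p <= x `^ p + y `^ p.
Proof.
move=> m0 mx my.
have x0 : 0 <= x by apply: le_trans mx.
have y0 : 0 <= y by apply: le_trans my.
have hm : forall w, m <= w -> (1 - p) * m `^ p <= (1 - p) * w `^ p.
  by move=> w mw; apply: ler_wpM2l; [rewrite subr_ge0 ltW | exact: ler_powRp].
have [xy|yx] := leP x y.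
  have := key_powR x0 xy; have := hm x mx; lra.
have := key_powR y0 (ltW yx); rewrite [y + x]addrC; have := hm y my; lra.
Qed.

Lemma subadd_norm (u v : R) : `|u + v| `^ p <= `|u| `^ p + `|v| `^ p.
Proof.
apply: le_trans (subadd_powR (normr_ge0 _) (normr_ge0 _)).
by apply: ler_powRp => //; apply: ler_normD.
Qed.

Lemma strict_norm (u v m : R) : 0 <= m -> m <= `|u| -> m <= `|v| ->
  `|u + v| `^ p + (1 - p) * m `^ p <= `|u| `^ p + `|v| `^ p.
Proof.
move=> m0 mu mv; apply: le_trans (strict_powR m0 mu mv); rewrite lerD2r.
by apply: ler_powRp => //; apply: ler_normD.
Qed.

End Pw.
Lemma real_complete (R : realType) (u : nat -> R) :
  (forall e : R, 0 < e -> exists N, forall m n, (N <= m)%N -> (N <= n)%N -> `|u m - u n| < e) ->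
  exists l : R, forall e : R, 0 < e -> exists N, forall n, (N <= n)%N -> `|u n - l| < e.
Proof.
move=> Hc.
have : cvg (u @ \oo).
  apply/cauchy_cvgP/cauchy_ballP => e e0.
  have [N HN] := Hc e e0.
  exists (u @` [set n | (N <= n)%N], u @` [set n | (N <= n)%N]).
    by split; exists N => // n Hn; exists n.
  case=> a b /= [[m Hm <-] [n Hn <-]]; rewrite /ball /=.
  by rewrite distrC; apply: HN.
move=> /cvgrPdist_lt H; exists (lim (u @ \oo)) => e e0.
have [N _ HN] := H e e0.
by exists N => n Hn; rewrite distrC; apply: HN.
Qed.
Section Gen.
Variable R : realType.
Variable p : R.
Hypothesis p0 : 0 < p.
Hypothesis p1 : p < 1.
Variable n : nat.
Variable Phi : 'rV[R]_n -> R.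
Hypothesis Phi_ge0 : forall v, 0 <= Phi v.
Hypothesis Phi_eq0 : forall v, Phi v = 0 -> v = 0.
Hypothesis PhiZ : forall k v, Phi (k *: v) = `|k| `^ p * Phi v.
Hypothesis PhiD : forall u v, Phi (u + v) <= Phi u + Phi v.
Variables c C : R.
Hypothesis c0 : 0 < c.
Hypothesis C0 : 0 <= C.
Hypothesis Philo : forall (v : 'rV[R]_n) i, c * `|v ord0 i| `^ p <= Phi v.
Hypothesis Phihi : forall (v : 'rV[R]_n), Phi v <= C * \sum_i `|v ord0 i| `^ p.

Definition nrmP (v : 'rV[R]_n) := Phi v `^ p^-1.

Lemma nrmP_p v : nrmP v `^ p = Phi v.
Proof. by rewrite /nrmP powRVK. Qed.

Lemma Phi0 : Phi 0 = 0.
Proof. by rewrite -(scale0r 0) PhiZ normr0 powR0p // mul0r. Qed.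

Lemma nrmP_pnorm : is_pnorm p nrmP.
Proof.
split; first by move=> v; apply: powR_ge0.
split.
  move=> v; split; first by move/powR_eq0_eq0/Phi_eq0.
  by move=> ->; rewrite /nrmP Phi0 powR0 // gt_eqF // pinv_gt0.
split.
  move=> k v; rewrite /nrmP PhiZ powRM ?powR_ge0 // powRKV //.
by move=> u v; rewrite !nrmP_p.
Qed.

Lemma coord_small (w : 'rV[R]_n) (e : R) i : 0 < e ->
  nrmP w < (c * e `^ p) `^ p^-1 -> `|w ord0 i| < e.
Proof.
move=> e0 h.
have h1 : Phi w < c * e `^ p.
  rewrite -nrmP_p -[c * _](@powRVK _ p) ?mulr_ge0 ?powR_ge0 ?ltW //.
  by apply: (gt0_ltr_powR p0) => //; rewrite nnegrE ?powR_ge0.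
have h2 : `|w ord0 i| `^ p < e `^ p.
  by rewrite -(ltr_pM2l c0); apply: le_lt_trans (Philo _ _) h1.
rewrite ltNge; apply/negP => he.
have := ler_powRp p0 (ltW e0) he; rewrite leNgt h2 //.
Qed.

Lemma nrmP_complete : pn_complete nrmP.
Proof.
move=> s Hc.
have hcoord : forall i, exists l : R, forall e : R, 0 < e ->
    exists N, forall k, (N <= k)%N -> `|s k ord0 i - l| < e.
  move=> i; apply: real_complete => e e0.
  have ee : 0 < (c * e `^ p) `^ p^-1 by rewrite powR_gt0 // mulr_gt0 // powR_gt0.
  have [N HN] := Hc _ ee; exists N => k m hk hm.
  by have := coord_small i e0 (HN k m hk hm); rewrite !mxE.
have [l hl] := choice hcoord.
exists (\row_i l i) => e e0.
pose E := e `^ p.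
have E0 : 0 < E by rewrite powR_gt0.
pose K := C * n%:R.
have K0 : 0 <= K by rewrite mulr_ge0.
pose eta := (E / (K + 1)) `^ p^-1.
have eta0 : 0 < eta by rewrite powR_gt0 // divr_gt0 // ltr_wpDl.
have [Nf hNf] := choice (fun i => hl i eta eta0).
exists (\max_(i < n) Nf i)%N => k hk.
have hsum : Phi (s k - \row_i l i) <= K * (E / (K + 1)).
  apply: le_trans (Phihi _) _; rewrite /K -mulrA ler_wpM2l //.
  have -> : n%:R * (E / (K + 1)) = \sum_(i < n) (E / (K + 1)).
    by rewrite sumr_const card_ord mulr_natl.
  apply: ler_sum => i _; rewrite !mxE.
  rewrite -[E / (K + 1)](@powRVK _ p) //; last by rewrite divr_ge0 ?ltW // ltr_wpDl.
  apply: ler_powRp => //; apply: ltW; apply: hNf.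
  by apply: leq_trans hk; apply: leq_bigmax.
have hlt : Phi (s k - \row_i l i) < E.
  apply: le_lt_trans hsum _.
  rewrite mulrA ltr_pdivrMr ?ltr_wpDl //; nra.
rewrite /nrmP -[e](@powRKV _ p) ?ltW //.
by apply: ltr_powRV => //.
Qed.

End Gen.
Section LP.
Variable R : realType.
Variable p : R.
Hypothesis p0 : 0 < p.
Hypothesis p1 : p < 1.
Variable n : nat.

Definition PhiL (v : 'rV[R]_n) := \sum_i `|v ord0 i| `^ p.

Lemma PhiL_ge0 v : 0 <= PhiL v.
Proof. by apply: sumr_ge0 => i _; apply: powR_ge0. Qed.

Lemma PhiL_eq0 v : PhiL v = 0 -> v = 0.
Proof.
move=> /eqP; rewrite psumr_eq0 => [/allP h|i _]; last exact: powR_ge0.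
apply/rowP => i; rewrite mxE.
have := h i (mem_index_enum _); rewrite /= powR_eq0 => /andP[/eqP + _].
by move/eqP; rewrite normr_eq0 => /eqP.
Qed.

Lemma PhiLZ k v : PhiL (k *: v) = `|k| `^ p * PhiL v.
Proof.
rewrite /PhiL mulr_sumr; apply: eq_bigr => i _.
by rewrite mxE normrM powRM.
Qed.

Lemma PhiLD u v : PhiL (u + v) <= PhiL u + PhiL v.
Proof.
rewrite /PhiL -big_split /=; apply: ler_sum => i _; rewrite mxE.
exact: subadd_norm.
Qed.

Lemma PhiL_lo (v : 'rV[R]_n) i : 1 * `|v ord0 i| `^ p <= PhiL v.
Proof.
rewrite mul1r /PhiL (bigD1 i) //= lerDl.
by apply: sumr_ge0 => j _; apply: powR_ge0.
Qed.

Lemma PhiL_hi (v : 'rV[R]_n) : PhiL v <= 1 * \sum_i `|v ord0 i| `^ p.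
Proof. by rewrite mul1r. Qed.

End LP.
Section FP.
Variable R : realType.
Variables (p : R) (T : Type) (d : T -> T -> R) (S : set T) (o : T) (mol : seq (R * T)).

Definition FPset := [set r | exists (V : lmodType R) (nrm : V -> R) (f : T -> V),
         [/\ is_pnorm p nrm, pn_complete nrm, f o = 0,
             (forall u v, S u -> S v -> nrm (f u - f v) <= d u v) &
             r = nrm (\sum_(c <- mol) c.1 *: f c.2)]].

Definition FPbound (B : R) := forall (V : lmodType R) (nrm : V -> R) (f : T -> V),
  is_pnorm p nrm -> pn_complete nrm -> f o = 0 ->
  (forall u v, S u -> S v -> nrm (f u - f v) <= d u v) ->
  nrm (\sum_(c <- mol) c.1 *: f c.2) <= B.

Lemma fp_le B w : FPbound B -> FPset w -> free_pnorm p d S o mol <= B.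
Proof.
move=> hB hw; rewrite /free_pnorm; apply: ge_sup; first by exists w.
by move=> r [V [nrm [f [h1 h2 h3 h4 ->]]]]; exact: (hB V nrm f h1 h2 h3 h4).
Qed.

Lemma fp_ge B w : FPbound B -> FPset w -> w <= free_pnorm p d S o mol.
Proof.
move=> hB hw; rewrite /free_pnorm; apply: ub_le_sup => //; exists B.
by move=> r [V [nrm [f [h1 h2 h3 h4 ->]]]]; exact: (hB V nrm f h1 h2 h3 h4).
Qed.

End FP.

Lemma witness_in (R : realType) (p : R) (p0 : 0 < p) (n : nat) (Phi : 'rV[R]_n -> R)
  (c C : R) T (d : T -> T -> R) S o mol (f : T -> 'rV[R]_n) :
  (forall v, 0 <= Phi v) -> (forall v, Phi v = 0 -> v = 0) ->
  (forall k v, Phi (k *: v) = `|k| `^ p * Phi v) ->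
  (forall u v, Phi (u + v) <= Phi u + Phi v) ->
  0 < c -> 0 <= C ->
  (forall (v : 'rV[R]_n) i, c * `|v ord0 i| `^ p <= Phi v) ->
  (forall (v : 'rV[R]_n), Phi v <= C * \sum_i `|v ord0 i| `^ p) ->
  f o = 0 ->
  (forall u v, S u -> S v -> Phi (f u - f v) <= d u v `^ p) ->
  (forall u v, 0 <= d u v) ->
  FPset p d S o mol (nrmP p Phi (\sum_(c <- mol) c.1 *: f c.2)).
Proof.
move=> h1 h2 h3 h4 c0 C0 hlo hhi fo hL dge0.
exists 'rV[R]_n, (nrmP p Phi), f; split => //.
- exact: (nrmP_pnorm p0 h1 h2 h3 h4).
- exact: (nrmP_complete p0 h1 c0 C0 hlo hhi).
- move=> u v Su Sv; apply: (le_powR_rev p0) => //; first exact: powR_ge0.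
  by rewrite (nrmP_p p0 h1); apply: hL.
Qed.
Lemma sum2 (R : realType) (F : 'I_2 -> R) : \sum_(i < 2) F i = F ord0 + F ord_max.
Proof. by rewrite big_ord_recr big_ord1; congr (F _ + _); apply/val_inj. Qed.

Lemma ord2_cases (i : 'I_2) : i = ord0 \/ i = ord_max.
Proof. by case: i => [[|[|k]] hk]; [left|right|]; try apply/val_inj. Qed.

Section Inf.
Variable R : realType.
Variable p : R.
Hypothesis p0 : 0 < p.
Hypothesis p1 : p < 1.
Variables Lx Ly L0 : R.
Hypothesis Lx0 : 0 < Lx.
Hypothesis Ly0 : 0 < Ly.
Hypothesis L00 : 0 < L0.

Definition g2 (v : 'rV[R]_2) (t : R) :=
  `|v ord0 ord0 - t| `^ p * (Lx + L0) + `|v ord0 ord_max + t| `^ p * (Ly + L0)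
  + `|t| `^ p * (Lx + Ly).

Lemma g2_ge0 v t : 0 <= g2 v t.
Proof.
by rewrite /g2 !addr_ge0 // mulr_ge0 ?powR_ge0 // addr_ge0 // ltW.
Qed.

Definition Phi2 (v : 'rV[R]_2) := inf (range (g2 v)).

Lemma P2le v t : Phi2 v <= g2 v t.
Proof.
apply: ge_inf; last by exists t.
by exists 0 => _ [s _ <-]; apply: g2_ge0.
Qed.

Lemma P2ge v x : (forall t, x <= g2 v t) -> x <= Phi2 v.
Proof.
move=> h; apply: lb_le_inf; first by exists (g2 v 0), 0.
by move=> _ [s _ <-].
Qed.

Lemma Phi2_ge0 v : 0 <= Phi2 v.
Proof. by apply: P2ge => t; apply: g2_ge0. Qed.

Lemma g2Z k v t : g2 (k *: v) (k * t) = `|k| `^ p * g2 v t.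
Proof.
rewrite /g2 !mxE -mulrBr -mulrDr !normrM !powRM //.
by rewrite !mulrDr !mulrA.
Qed.

Lemma Phi2Z k v : Phi2 (k *: v) = `|k| `^ p * Phi2 v.
Proof.
have [->|k0] := eqVneq k 0.
  rewrite scale0r normr0 powR0p // mul0r; apply/eqP; rewrite eq_le Phi2_ge0 andbT.
  apply: le_trans (P2le _ 0) _; have := g2Z 0 v 0.
  by rewrite scale0r mul0r normr0 powR0p // mul0r => ->.
have kp : 0 < `|k| `^ p by rewrite powR_gt0 // normr_gt0.
apply/eqP; rewrite eq_le; apply/andP; split.
  rewrite mulrC -ler_pdivrMr //; apply: P2ge => t.
  rewrite ler_pdivrMr // mulrC -g2Z; exact: (P2le (k *: v) (k * t)).
apply: P2ge => s; have -> : s = k * (s / k) by rewrite mulrCA divff // mulr1.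
rewrite g2Z; apply: ler_wpM2l; [exact: ltW | exact: (P2le v (s / k))].
Qed.

Lemma g2D u v t s : g2 (u + v) (t + s) <= g2 u t + g2 v s.
Proof.
rewrite /g2 !mxE.
have e1 : u ord0 ord0 + v ord0 ord0 - (t + s) = (u ord0 ord0 - t) + (v ord0 ord0 - s) by ring.
have e2 : u ord0 ord_max + v ord0 ord_max + (t + s) = (u ord0 ord_max + t) + (v ord0 ord_max + s) by ring.
rewrite e1 e2.
have h1 := subadd_norm p0 p1 (u ord0 ord0 - t) (v ord0 ord0 - s).
have h2 := subadd_norm p0 p1 (u ord0 ord_max + t) (v ord0 ord_max + s).
have h3 := subadd_norm p0 p1 t s.
have a1 : 0 <= Lx + L0 by rewrite addr_ge0 // ltW.
have a2 : 0 <= Ly + L0 by rewrite addr_ge0 // ltW.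
have a3 : 0 <= Lx + Ly by rewrite addr_ge0 // ltW.
have := ler_wpM2r a1 h1; have := ler_wpM2r a2 h2; have := ler_wpM2r a3 h3.
rewrite !mulrDl; lra.
Qed.

Lemma Phi2D u v : Phi2 (u + v) <= Phi2 u + Phi2 v.
Proof.
have H1 : forall s, Phi2 (u + v) - g2 v s <= Phi2 u.
  move=> s; apply: P2ge => t.
  have := P2le (u + v) (t + s); have := g2D u v t s; lra.
have H2 : Phi2 (u + v) - Phi2 u <= Phi2 v.
  apply: P2ge => s; have := H1 s; lra.
lra.
Qed.

Definition cm := Num.min Lx (Num.min Ly L0).

Lemma cm_gt0 : 0 < cm.
Proof. by rewrite /cm !lt_min Lx0 Ly0 L00. Qed.

Lemma cm_le : cm <= Lx /\ cm <= Ly /\ cm <= L0.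
Proof. by rewrite /cm !ge_min !lexx !orbT. Qed.

Lemma Phi2_lo (v : 'rV[R]_2) i : cm * `|v ord0 i| `^ p <= Phi2 v.
Proof.
have [h1 [h2 h3]] := cm_le.
have cm0 := cm_gt0.
apply: P2ge => t; rewrite /g2.
have q1 := powR_ge0 `|v ord0 ord0 - t| p.
have q2 := powR_ge0 `|v ord0 ord_max + t| p.
have q3 := powR_ge0 `|t| p.
case: (ord2_cases i) => ->.
  have s1 := subadd_norm p0 p1 (v ord0 ord0 - t) t.
  rewrite subrK in s1.
  have := ler_wpM2l (ltW cm0) s1.
  nra.
have s1 := subadd_norm p0 p1 (v ord0 ord_max + t) (- t).
rewrite addrK normrN in s1.
have := ler_wpM2l (ltW cm0) s1.
nra.
Qed.

Lemma Phi2_hi (v : 'rV[R]_2) : Phi2 v <= (Lx + Ly + L0) * \sum_i `|v ord0 i| `^ p.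
Proof.
apply: le_trans (P2le _ 0) _; rewrite sum2 /g2 subr0 addr0 normr0 powR0p // mul0r addr0.
have q1 := powR_ge0 `|v ord0 ord0| p.
have q2 := powR_ge0 `|v ord0 ord_max| p.
have := mulr_ge0 q1 (ltW Ly0); have := mulr_ge0 q2 (ltW Lx0).
nra.
Qed.

Lemma Phi2_eq0 v : Phi2 v = 0 -> v = 0.
Proof.
move=> h; apply/rowP => i; rewrite mxE.
have := Phi2_lo v i; rewrite h.
have cm0 := cm_gt0.
have q := powR_ge0 `|v ord0 i| p.
move=> hh.
have : `|v ord0 i| `^ p = 0 by nra.
by move/powR_eq0_eq0/eqP; rewrite normr_eq0 => /eqP.
Qed.

End Inf.
Definition vec2 (R : realType) (a b : R) : 'rV[R]_2 :=
  \row_(i < 2) (if i == ord0 then a else b).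

Lemma vec2_0 (R : realType) (a b : R) : vec2 a b ord0 ord0 = a.
Proof. by rewrite mxE. Qed.
Lemma vec2_1 (R : realType) (a b : R) : vec2 a b ord0 ord_max = b.
Proof. by rewrite mxE. Qed.

Section Strict.
Variable R : realType.
Variable p : R.
Hypothesis p0 : 0 < p.
Hypothesis p1 : p < 1.
Variables Lx Ly L0 : R.
Hypothesis Lx0 : 0 < Lx.
Hypothesis Ly0 : 0 < Ly.
Hypothesis L00 : 0 < L0.

Lemma Phi2_strict (a b : R) : a != 0 -> b != 0 -> a + b != 0 ->
  `|a| `^ p * Lx + `|b| `^ p * Ly + `|a + b| `^ p * L0
    < Phi2 p Lx Ly L0 (vec2 a b).
Proof.
move=> a0 b0 ab0.
pose mu := Num.min `|a| (Num.min `|b| `|a + b|) / 2.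
have mu0 : 0 < mu by rewrite /mu divr_gt0 // !lt_min !normr_gt0 a0 b0 ab0.
have hma : mu * 2 <= `|a| by rewrite /mu divfK ?pnatr_eq0 // ge_min lexx.
have hmb : mu * 2 <= `|b| by rewrite /mu divfK ?pnatr_eq0 // !ge_min lexx !orbT.
have hmab : mu * 2 <= `|a + b| by rewrite /mu divfK ?pnatr_eq0 // !ge_min lexx !orbT.
pose e := (1 - p) * mu `^ p.
have e0 : 0 < e by rewrite /e mulr_gt0 ?subr_gt0 // powR_gt0.
have cm0 := cm_gt0 Lx0 Ly0 L00.
have [cx [cy c0]] := @cm_le R Lx Ly L0.
set c := cm Lx Ly L0 in cm0 cx cy c0.
have ce : 0 < c * e by rewrite mulr_gt0.
suff H : forall t, `|a| `^ p * Lx + `|b| `^ p * Ly + `|a + b| `^ p * L0 + c * e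
    <= g2 p Lx Ly L0 (vec2 a b) t.
  have := P2ge (fun t => H t); lra.
move=> t; rewrite /g2 vec2_0 vec2_1.
have ta : (a - t) + t = a by rewrite subrK.
have tb : (b + t) + (- t) = b by rewrite addrK.
have tab : (a - t) + (b + t) = a + b by ring.
have s1 := subadd_norm p0 p1 (a - t) t; rewrite ta in s1.
have s2 := subadd_norm p0 p1 (b + t) (- t); rewrite tb normrN in s2.
have s3 := subadd_norm p0 p1 (a - t) (b + t); rewrite tab in s3.
have n1 := ler_normD (a - t) t; rewrite ta in n1.
have n2 := ler_normD (b + t) (- t); rewrite tb normrN in n2.
have n3 := ler_normD (a - t) (b + t); rewrite tab in n3.
have hmu := ltW mu0.
have P1 : 0 <= Lx * (`|a - t| `^ p + `|t| `^ p - `|a| `^ p).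
  by rewrite mulr_ge0 ?subr_ge0 // ltW.
have P2 : 0 <= Ly * (`|b + t| `^ p + `|t| `^ p - `|b| `^ p).
  by rewrite mulr_ge0 ?subr_ge0 // ltW.
have P3 : 0 <= L0 * (`|a - t| `^ p + `|b + t| `^ p - `|a + b| `^ p).
  by rewrite mulr_ge0 ?subr_ge0 // ltW.
have [tmu|mut] := ltP `|t| mu.
  have m1 : mu <= `|a - t| by lra.
  have m2 : mu <= `|b + t| by lra.
  have h := strict_norm p0 p1 hmu m1 m2.
  rewrite tab in h.
  have m3 : e <= `|a - t| `^ p + `|b + t| `^ p - `|a + b| `^ p by rewrite /e; lra.
  have Q := ler_pM (ltW cm0) (ltW e0) c0 m3.
  nra.
have [amu|mua] := ltP `|a - t| mu.
  have [bmu|mub] := ltP `|b + t| mu.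
    exfalso; lra.
  have m1 : mu <= `|- t| by rewrite normrN.
  have h := strict_norm p0 p1 hmu mub m1.
  rewrite tb normrN in h.
  have m3 : e <= `|b + t| `^ p + `|t| `^ p - `|b| `^ p by rewrite /e; lra.
  have Q := ler_pM (ltW cm0) (ltW e0) cy m3.
  nra.
have h := strict_norm p0 p1 hmu mua mut.
rewrite ta in h.
have m3 : e <= `|a - t| `^ p + `|t| `^ p - `|a| `^ p by rewrite /e; lra.
have Q := ler_pM (ltW cm0) (ltW e0) cx m3.
nra.
Qed.

End Strict.
Section Cut.
Variable R : realType.
Variable p : R.
Hypothesis p0 : 0 < p.
Hypothesis p1 : p < 1.
Variable T : eqType.
Variables x y z : T.
Variable ws : seq R.

Definition wt (k : 'I_6) : R := nth 0 ws k.

Definition mem6 (u : T) (k : 'I_6) : R :=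
  nth 0 (if u == x then [:: 1; 1; 0; 0; 1; 1] else if u == y then [:: 0; 0; 1; 1; 1; 1]
         else if u == z then [:: 0; 1; 0; 1; 0; 1] else [:: 0; 0; 0; 0; 0; 0]) k.

Definition cutf (u : T) : 'rV[R]_6 := \row_k (wt k `^ p^-1 * mem6 u k).

Hypothesis wt_ge0 : forall k, 0 <= wt k.

Lemma cut_diff u v : PhiL p (cutf u - cutf v) =
  \sum_(k < 6) wt k * `|mem6 u k - mem6 v k| `^ p.
Proof.
apply: eq_bigr => k _; rewrite !mxE -mulrBr normrM powRM // ger0_norm ?powR_ge0 //.
by rewrite powRVK.
Qed.

Lemma cut_comb a b : PhiL p (a *: cutf x + b *: cutf y) =
  \sum_(k < 6) wt k * `|a * mem6 x k + b * mem6 y k| `^ p.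
Proof.
apply: eq_bigr => k _; rewrite !mxE.
have -> : a * (wt k `^ p^-1 * mem6 x k) + b * (wt k `^ p^-1 * mem6 y k) =
  wt k `^ p^-1 * (a * mem6 x k + b * mem6 y k) by ring.
by rewrite normrM powRM // ger0_norm ?powR_ge0 // powRVK.
Qed.

End Cut.
Lemma sum6 (R : realType) (F : 'I_6 -> R) : \sum_(k < 6) F k =
  F (@Ordinal 6 0 isT) + F (@Ordinal 6 1 isT) + F (@Ordinal 6 2 isT) +
  F (@Ordinal 6 3 isT) + F (@Ordinal 6 4 isT) + F (@Ordinal 6 5 isT).
Proof.
rewrite !big_ord_recl big_ord0 addr0 !addrA.
by congr (F _ + F _ + F _ + F _ + F _ + F _); apply/val_inj.
Qed.
Definition ell (R : realType) (T : eqType) (o x y : T) (Lx Ly L0 : R) (u : T) : R :=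
  if u == o then L0 else if u == x then Lx else if u == y then Ly else 0.

Lemma dprime_pow (R : realType) (p : R) (T : eqType) (d : T -> T -> R) (o x y z : T)
  (Lx Ly L0 : R) :
  0 < p ->
  o != x -> o != y -> o != z -> x != y -> x != z -> y != z ->
  (forall w : T, w = o \/ w = x \/ w = y \/ w = z) ->
  (forall u, d u u = 0) ->
  gromov_ext p d x o y = Lx `^ p^-1 ->
  gromov_ext p d y o x = Ly `^ p^-1 ->
  gromov_ext p d o x y = L0 `^ p^-1 ->
  0 <= Lx -> 0 <= Ly -> 0 <= L0 ->
  d x o `^ p = Lx + L0 -> d o x `^ p = Lx + L0 ->
  d y o `^ p = Ly + L0 -> d o y `^ p = Ly + L0 ->
  d x y `^ p = Lx + Ly -> d y x `^ p = Lx + Ly ->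
  forall u v, (dprime p d o x y z u v) `^ p =
    if u == v then 0 else ell o x y Lx Ly L0 u + ell o x y Lx Ly L0 v.
Proof.
move=> p0 hox hoy hoz hxy hxz hyz hall dd gx gy g0 Lx0 Ly0 L00 e1 e2 e3 e4 e5 e6 u v.
have eox := negbTE hox; have eoy := negbTE hoy; have eoz := negbTE hoz.
have exy := negbTE hxy; have exz := negbTE hxz; have eyz := negbTE hyz.
have exo : (x == o) = false by rewrite eq_sym.
have eyo : (y == o) = false by rewrite eq_sym.
have ezo : (z == o) = false by rewrite eq_sym.
have eyx : (y == x) = false by rewrite eq_sym.
have ezx : (z == x) = false by rewrite eq_sym.
have ezy : (z == y) = false by rewrite eq_sym.
have eLx := powRVK p0 Lx0; have eLy := powRVK p0 Ly0; have eL0 := powRVK p0 L00.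
have pz := powR0p p0.
case: (hall u) => [->|[->|[->|->]]]; case: (hall v) => [->|[->|[->|->]]];
rewrite /ell /dprime /dz ?eqxx ?eox ?eoy ?eoz ?exo ?exy ?exz ?eyo ?eyx ?eyz ?ezo ?ezx ?ezy /=
  ?gx ?gy ?g0 ?dd ?eLx ?eLy ?eL0 ?pz ?e1 ?e2 ?e3 ?e4 ?e5 ?e6 ?addr0 ?add0r //;
by rewrite addrC.
Qed.
Lemma pmetric_of_pow (R : realType) (p : R) (T : eqType) (dd : T -> T -> R) (l : T -> R) :
  0 < p ->
  (forall u v, 0 <= dd u v) ->
  (forall u v, dd u v `^ p = if u == v then 0 else l u + l v) ->
  (forall u, 0 <= l u) ->
  (forall u v, u != v -> 0 < l u + l v) ->
  is_pmetric p dd.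
Proof.
move=> p0 h0 hD hl hpos.
have pz := powR0p p0.
split => //; split.
  move=> u v; split.
    move=> E; case: (eqVneq u v) => // /[dup] nuv /negbTE nuv'.
    have := hD u v; rewrite E pz nuv' => e.
    by have := hpos _ _ nuv; rewrite -e ltxx.
  move=> <-; have := hD u u; rewrite eqxx => /powR_eq0_eq0 //.
split.
  move=> u v; rewrite -(powRKV p0 (h0 u v)) -(powRKV p0 (h0 v u)) !hD eq_sym.
  by case: (v == u) => //; rewrite addrC.
move=> u v w; rewrite !hD.
have := hl u; have := hl v; have := hl w.
case: (eqVneq u v) => [<-|nuv]; first by rewrite ?eqxx; case: (u == w); lra.
case: (eqVneq v w) => [<-|nvw]; first by rewrite ?eqxx ?(negbTE nuv); lra.
rewrite ?(negbTE nuv) ?(negbTE nvw); case: (u == w); lra.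
Qed.

Section Bounds.
Variable R : realType.
Variable p : R.
Hypothesis p0 : 0 < p.
Hypothesis p1 : p < 1.
Variable V : lmodType R.
Variable nrm : V -> R.
Hypothesis hn : is_pnorm p nrm.

Lemma pn_scale k v : nrm (k *: v) `^ p = `|k| `^ p * nrm v `^ p.
Proof.
case: hn => h0 [_ [hZ _]]; rewrite hZ powRM //.
Qed.

Lemma pn_add u v : nrm (u + v) `^ p <= nrm u `^ p + nrm v `^ p.
Proof. by case: hn => _ [_ [_ hD]]; apply: hD. Qed.

Lemma pn_bound2 a b u v Bu Bv : nrm u `^ p <= Bu -> nrm v `^ p <= Bv ->
  nrm (a *: u + b *: v) `^ p <= `|a| `^ p * Bu + `|b| `^ p * Bv.
Proof.
move=> hu hv; apply: le_trans (pn_add _ _) _; rewrite !pn_scale.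
by apply: lerD; apply: ler_wpM2l => //; apply: powR_ge0.
Qed.

Lemma pn_bound3 a b c u v w Bu Bv Bw : nrm u `^ p <= Bu -> nrm v `^ p <= Bv ->
  nrm w `^ p <= Bw ->
  nrm (a *: u + b *: v + c *: w) `^ p <= `|a| `^ p * Bu + `|b| `^ p * Bv + `|c| `^ p * Bw.
Proof.
move=> hu hv hw; apply: le_trans (pn_add _ _) _; rewrite pn_scale.
apply: lerD; first exact: pn_bound2.
by apply: ler_wpM2l => //; apply: powR_ge0.
Qed.

Lemma pn_lip u (t : R) : 0 <= t -> nrm u <= t -> nrm u `^ p <= t `^ p.
Proof. by case: hn => h0 _ t0 h; apply: ler_powRp. Qed.

End Bounds.

Lemma sum_mol (R : realType) (V : lmodType R) (T : Type) (f : T -> V) a b (x y : T) :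
  \sum_(c <- [:: (a, x); (b, y)]) c.1 *: f c.2 = a *: f x + b *: f y.
Proof. by rewrite !big_cons big_nil addr0. Qed.
Lemma wt_ge0_6 (R : realType) (w0 w1 w2 w3 w4 w5 : R) :
  0 <= w0 -> 0 <= w1 -> 0 <= w2 -> 0 <= w3 -> 0 <= w4 -> 0 <= w5 ->
  forall k, 0 <= wt [:: w0; w1; w2; w3; w4; w5] k.
Proof.
by move=> ? ? ? ? ? ? [[|[|[|[|[|[|k]]]]]] hk]; rewrite /wt /=.
Qed.

Section CutW.
Variable R : realType.
Variable p : R.
Hypothesis p0 : 0 < p.
Hypothesis p1 : p < 1.
Variable T : eqType.
Variables o x y z : T.
Hypotheses (hox : o != x) (hoy : o != y) (hoz : o != z) (hxy : x != y) (hxz : x != z) (hyz : y != z).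
Hypothesis hall : forall w : T, w = o \/ w = x \/ w = y \/ w = z.
Variables w0 w1 w2 w3 w4 w5 : R.
Hypotheses (hw0 : 0 <= w0) (hw1 : 0 <= w1) (hw2 : 0 <= w2) (hw3 : 0 <= w3) (hw4 : 0 <= w4) (hw5 : 0 <= w5).

Let ws := [:: w0; w1; w2; w3; w4; w5].
Let hws := wt_ge0_6 hw0 hw1 hw2 hw3 hw4 hw5.

Lemma cutf_o : cutf p x y z ws o = 0.
Proof.
have eox := negbTE hox; have eoy := negbTE hoy; have eoz := negbTE hoz.
apply/rowP => k; rewrite !mxE /mem6 eox eoy eoz.
by case: k => [[|[|[|[|[|[|k]]]]]] hk] /=; rewrite ?mulr0.
Qed.

Lemma cut_value a b : PhiL p (a *: cutf p x y z ws x + b *: cutf p x y z ws y) =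
  `|a| `^ p * (w0 + w1) + `|b| `^ p * (w2 + w3) + `|a + b| `^ p * (w4 + w5).
Proof.
have eyx : (y == x) = false by rewrite eq_sym (negbTE hxy).
rewrite cut_comb // sum6 /mem6 /wt /= eqxx eyx eqxx /=.
rewrite ?mulr1 ?mulr0 ?addr0 ?add0r; ring.
Qed.

Lemma cut_table u v : PhiL p (cutf p x y z ws u - cutf p x y z ws v) =
  if u == v then 0 else
  if (u == o) && (v == x) || (u == x) && (v == o) then w0 + w1 + w4 + w5 else
  if (u == o) && (v == y) || (u == y) && (v == o) then w2 + w3 + w4 + w5 else
  if (u == o) && (v == z) || (u == z) && (v == o) then w1 + w3 + w5 else
  if (u == x) && (v == y) || (u == y) && (v == x) then w0 + w1 + w2 + w3 else
  if (u == x) && (v == z) || (u == z) && (v == x) then w0 + w3 + w4 else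
  w1 + w2 + w4.
Proof.
have eox := negbTE hox; have eoy := negbTE hoy; have eoz := negbTE hoz.
have exy := negbTE hxy; have exz := negbTE hxz; have eyz := negbTE hyz.
have exo : (x == o) = false by rewrite eq_sym.
have eyo : (y == o) = false by rewrite eq_sym.
have ezo : (z == o) = false by rewrite eq_sym.
have eyx : (y == x) = false by rewrite eq_sym.
have ezx : (z == x) = false by rewrite eq_sym.
have ezy : (z == y) = false by rewrite eq_sym.
have pz := powR0p p0.
rewrite cut_diff //.
case: (hall u) => [->|[->|[->|->]]]; case: (hall v) => [->|[->|[->|->]]];
rewrite sum6 /mem6 /wt /= ?eqxx ?eox ?eoy ?eoz ?exo ?exy ?exz ?eyo ?eyx ?eyz ?ezo ?ezx ?ezy /=;
rewrite ?subrr ?subr0 ?sub0r ?normrN ?normr1 ?normr0 ?powR1p ?pz ?mulr1 ?mulr0 ?addr0 ?add0r //; ring.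
Qed.

End CutW.
Lemma witness6 (R : realType) (p : R) (T : eqType) (dd : T -> T -> R) (S : set T)
  (o x y z : T) (w0 w1 w2 w3 w4 w5 : R) (mol : seq (R * T)) :
  0 < p -> p < 1 -> o != x -> o != y -> o != z ->
  0 <= w0 -> 0 <= w1 -> 0 <= w2 -> 0 <= w3 -> 0 <= w4 -> 0 <= w5 ->
  (forall u v, S u -> S v ->
     PhiL p (cutf p x y z [:: w0; w1; w2; w3; w4; w5] u -
             cutf p x y z [:: w0; w1; w2; w3; w4; w5] v) <= dd u v `^ p) ->
  (forall u v, 0 <= dd u v) ->
  FPset p dd S o mol (nrmP p (@PhiL _ p 6)
    (\sum_(c <- mol) c.1 *: cutf p x y z [:: w0; w1; w2; w3; w4; w5] c.2)).
Proof.
move=> p0 p1 hox hoy hoz h0 h1 h2 h3 h4 h5 hL hd.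
apply: (witness_in (c := 1) (C := 1) p0) => //.
- exact: PhiL_ge0.
- exact: PhiL_eq0.
- exact: PhiLZ.
- exact: PhiLD.
- exact: PhiL_lo.
- exact: PhiL_hi.
- exact: cutf_o.
Qed.

Lemma vec2B (R : realType) (a b c e : R) : vec2 a b - vec2 c e = vec2 (a - c) (b - e).
Proof. by apply/rowP => i; rewrite !mxE; case: ifP. Qed.

Lemma vec2_comb (R : realType) (a b : R) : a *: vec2 1 0 + b *: vec2 0 1 = vec2 a b.
Proof.
apply/rowP => i; rewrite !mxE; case: ifP => _; rewrite ?mulr1 ?mulr0 ?addr0 ?add0r //.
Qed.

Lemma vec2_00 (R : realType) : vec2 0 0 = 0 :> 'rV[R]_2.
Proof. by apply/rowP => i; rewrite !mxE; case: ifP. Qed.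

Lemma g2_vec2 (R : realType) (p Lx Ly L0 a b t : R) :
  g2 p Lx Ly L0 (vec2 a b) t =
  `|a - t| `^ p * (Lx + L0) + `|b + t| `^ p * (Ly + L0) + `|t| `^ p * (Lx + Ly).
Proof. by rewrite /g2 vec2_0 vec2_1. Qed.

Lemma witness2 (R : realType) (p : R) (T : eqType) (dd : T -> T -> R) (S : set T)
  (o : T) (f : T -> 'rV[R]_2) (Lx Ly L0 : R) (mol : seq (R * T)) :
  0 < p -> p < 1 -> 0 < Lx -> 0 < Ly -> 0 < L0 ->
  f o = 0 ->
  (forall u v, S u -> S v -> Phi2 p Lx Ly L0 (f u - f v) <= dd u v `^ p) ->
  (forall u v, 0 <= dd u v) ->
  FPset p dd S o mol (nrmP p (Phi2 p Lx Ly L0) (\sum_(c <- mol) c.1 *: f c.2)).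
Proof.
move=> p0 p1 Lx0 Ly0 L00 fo hL hd.
apply: (witness_in (c := cm Lx Ly L0) (C := Lx + Ly + L0) p0) => //.
- exact: Phi2_ge0.
- exact: Phi2_eq0.
- exact: Phi2Z.
- exact: Phi2D.
- exact: cm_gt0.
- by rewrite !addr_ge0 // ltW.
- exact: Phi2_lo.
- exact: Phi2_hi.
Qed.
Lemma lp_exists (R : realType) (Lx Ly L0 A B G : R) :
  0 < Lx -> 0 < Ly -> 0 < L0 -> 0 <= A -> 0 <= B -> 0 <= G ->
  Lx + Ly <= A + B -> Lx + L0 <= A + G -> Ly + L0 <= B + G ->
  exists sx sy s0, 0 <= sx /\ sx <= Lx /\ 0 <= sy /\ sy <= Ly /\ 0 <= s0 /\ s0 <= L0 /\
    sx + sy + s0 <= G /\ (Lx - sx) + sy + (L0 - s0) <= A /\ sx + (Ly - sy) + (L0 - s0) <= B.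
Proof.
move=> Lx0 Ly0 L00 hA hB hG t1 t2 t3.
have [hq1|hq1] := ltP L0 (Lx + L0 - A).
  exists (Lx - A), 0, L0; repeat apply: conj; lra.
have [hq2|hq2] := ltP L0 (Ly + L0 - B).
  exists 0, (Ly - B), L0; repeat apply: conj; lra.
have [hq3|hq3] := leP (Lx + L0 - A) (Ly + L0 - B).
  have [hq4|hq4] := leP (Ly + L0 - B) 0.
    exists 0, 0, 0; repeat apply: conj; lra.
  exists 0, 0, (Ly + L0 - B); repeat apply: conj; lra.
have [hq4|hq4] := leP (Lx + L0 - A) 0.
  exists 0, 0, 0; repeat apply: conj; lra.
exists 0, 0, (Lx + L0 - A); repeat apply: conj; lra.
Qed.
Lemma zmod_split (V : zmodType) (u v w w' : V) : u + v = (u - w) + (v - w') + (w + w').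
Proof. by rewrite addrACA !subrK. Qed.

Theorem proposition3p8 (R : realType) (p : R) (T : eqType) (d : T -> T -> R)
  (o x y z : T) :
  0 < p < 1 ->
  o != x -> o != y -> o != z -> x != y -> x != z -> y != z ->
  (forall w : T, w = o \/ w = x \/ w = y \/ w = z) ->
  is_pmetric p d ->
  d x y `^ p < d x o `^ p + d o y `^ p ->
  d o x `^ p < d o y `^ p + d y x `^ p ->
  d o y `^ p < d o x `^ p + d x y `^ p ->
  let N := [set o; x; y] in
  let d' := dprime p d o x y z in
  is_pmetric p d' /\
  (forall a b : R,
     free_pnorm p d' setT o [:: (a, x); (b, y)]
       <= free_pnorm p d setT o [:: (a, x); (b, y)]) /\
  (forall a b : R,
     free_pnorm p d' setT o [:: (a, x); (b, y)] `^ p =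
       d x o `^ p * ((`|a + b| `^ p + `|a| `^ p - `|b| `^ p) / 2)
     + d y o `^ p * ((`|a + b| `^ p + `|b| `^ p - `|a| `^ p) / 2)
     + d x y `^ p * ((`|a| `^ p + `|b| `^ p - `|a + b| `^ p) / 2)) /\
  (forall a b : R,
     free_pnorm p d' setT o [:: (a, x); (b, y)]
       = free_pnorm p d N o [:: (a, x); (b, y)]
     <-> a * b = 0 \/ a = - b).
Proof.
move=> /andP[p0 p1] hox hoy hoz hxy hxz hyz hall hmet h1 h2 h3 N d'.
case: hmet => dge0 [deq0 [dsym dtri]].
have eox := negbTE hox; have eoy := negbTE hoy; have eoz := negbTE hoz.
have exy := negbTE hxy; have exz := negbTE hxz; have eyz := negbTE hyz.
have exo : (x == o) = false by rewrite eq_sym.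
have eyo : (y == o) = false by rewrite eq_sym.
have ezo : (z == o) = false by rewrite eq_sym.
have eyx : (y == x) = false by rewrite eq_sym.
have ezx : (z == x) = false by rewrite eq_sym.
have ezy : (z == y) = false by rewrite eq_sym.
have dd : forall u, d u u = 0 by move=> u; apply/deq0.
have pz := powR0p p0.
rewrite (dsym o y) in h1.
rewrite (dsym o x) (dsym o y) (dsym y x) in h2.
rewrite (dsym o y) (dsym o x) in h3.
have hX := powR_ge0 (d x y) p.
have hY := powR_ge0 (d x o) p.
have hZ := powR_ge0 (d y o) p.
have [Lx dLx] : exists L, L = (d x o `^ p + d x y `^ p - d y o `^ p) / 2 by eexists.
have [Ly dLy] : exists L, L = (d y o `^ p + d x y `^ p - d x o `^ p) / 2 by eexists.
have [L0 dL0] : exists L, L = (d x o `^ p + d y o `^ p - d x y `^ p) / 2 by eexists.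
have Lx0 : 0 < Lx by rewrite dLx; lra.
have Ly0 : 0 < Ly by rewrite dLy; lra.
have L00 : 0 < L0 by rewrite dL0; lra.
have gx : gromov_ext p d x o y = Lx `^ p^-1.
  by rewrite /gromov_ext (dsym o x) (dsym y x) (dsym o y) dLx.
have gy : gromov_ext p d y o x = Ly `^ p^-1.
  by rewrite /gromov_ext (dsym o y) (dsym o x) dLy.
have g0 : gromov_ext p d o x y = L0 `^ p^-1.
  by rewrite /gromov_ext dL0.
have e1 : d x o `^ p = Lx + L0 by rewrite dLx dL0; field.
have e2 : d o x `^ p = Lx + L0 by rewrite dsym.
have e3 : d y o `^ p = Ly + L0 by rewrite dLy dL0; field.
have e4 : d o y `^ p = Ly + L0 by rewrite dsym.
have e5 : d x y `^ p = Lx + Ly by rewrite dLx dLy; field.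
have e6 : d y x `^ p = Lx + Ly by rewrite dsym.
have hD := dprime_pow p0 hox hoy hoz hxy hxz hyz hall dd gx gy g0 (ltW Lx0) (ltW Ly0) (ltW L00)
  e1 e2 e3 e4 e5 e6.
rewrite -/d' in hD.
have d'ge0 : forall u v, 0 <= d' u v.
  move=> u v; rewrite /d' /dprime /dz /gromov_ext.
  by repeat case: ifP => _; rewrite ?powR_ge0 ?dge0.
have hd'met : is_pmetric p d'.
  apply: (pmetric_of_pow p0 d'ge0 hD).
    move=> u; clear -Lx0 Ly0 L00; rewrite /ell; (repeat case: ifP => _); lra.
  move=> u v; case: (hall u) => [->|[->|[->|->]]]; case: (hall v) => [->|[->|[->|->]]];
  rewrite /ell ?eqxx ?eox ?eoy ?eoz ?exo ?exy ?exz ?eyo ?eyx ?eyz ?ezo ?ezx ?ezy //= => _; clear -Lx0 Ly0 L00; lra.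
have d'N : forall u v, u != z -> v != z -> d' u v = d u v.
  by move=> u v uz vz; rewrite /d' /dprime (negbTE uz) (negbTE vz).
split; first exact: hd'met.
have hLx := ltW Lx0; have hLy := ltW Ly0; have hL0 := ltW L00.
have l00 : (0 : R) <= 0 := lexx 0.
pose F (a b : R) := `|a| `^ p * Lx + `|b| `^ p * Ly + `|a + b| `^ p * L0.
have F0 : forall a b, 0 <= F a b.
  by move=> a b; rewrite /F !addr_ge0 // mulr_ge0 // powR_ge0.
(* tree witness *)
have ft_lip : forall u v,
    PhiL p (cutf p x y z [:: Lx; 0; Ly; 0; 0; L0] u - cutf p x y z [:: Lx; 0; Ly; 0; 0; L0] v)
    <= d' u v `^ p.
  move=> u v; rewrite (cut_table p0 hox hoy hoz hxy hxz hyz hall hLx l00 hLy l00 l00 hL0) hD /ell.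
  case: (hall u) => [->|[->|[->|->]]]; case: (hall v) => [->|[->|[->|->]]];
  rewrite ?eqxx ?eox ?eoy ?eoz ?exo ?exy ?exz ?eyo ?eyx ?eyz ?ezo ?ezx ?ezy /=;
  clear -Lx0 Ly0 L00; lra.
have ft_val : forall a b, nrmP p (@PhiL _ p 6)
    (\sum_(c <- [:: (a, x); (b, y)]) c.1 *: cutf p x y z [:: Lx; 0; Ly; 0; 0; L0] c.2)
    = F a b `^ p^-1.
  move=> aa bb; rewrite sum_mol /nrmP (cut_value p0 z hxy hLx l00 hLy l00 l00 hL0) /F.
  by rewrite !addr0 add0r.
have Wt : forall a b, FPset p d' setT o [:: (a, x); (b, y)] (F a b `^ p^-1).
  move=> a b; rewrite -ft_val; apply: witness6 => // u v _ _; exact: ft_lip.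
have inN : forall u, N u -> u != z.
  move=> u; rewrite /N /=; case=> [[->|->]|->] //.
have WtN : forall a b, FPset p d N o [:: (a, x); (b, y)] (F a b `^ p^-1).
  move=> a b; rewrite -ft_val; apply: witness6 => // u v Nu Nv.
  by rewrite -(d'N u v (inN _ Nu) (inN _ Nv)); exact: ft_lip.
have Bt : forall a b, FPbound p d' setT o [:: (a, x); (b, y)] (F a b `^ p^-1).
  move=> a b V nrm f hn hc fo hL; rewrite sum_mol.
  apply: (le_powRV p0); first by case: hn.
  have -> : a *: f x + b *: f y = a *: (f x - f z) + b *: (f y - f z) + (a + b) *: f z.
    by rewrite !scalerBr scalerDl -zmod_split.
  have hxz' : nrm (f x - f z) `^ p <= Lx.
    apply: le_trans (pn_lip p0 hn (d'ge0 _ _) (hL x z I I)) _.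
    by rewrite hD exz /ell exo eqxx ezo ezx ezy addr0.
  have hyz' : nrm (f y - f z) `^ p <= Ly.
    apply: le_trans (pn_lip p0 hn (d'ge0 _ _) (hL y z I I)) _.
    by rewrite hD eyz /ell eyo eyx eqxx ezo ezx ezy addr0.
  have hzo : nrm (f z) `^ p <= L0.
    have := hL z o I I; rewrite fo subr0 => h.
    apply: le_trans (pn_lip p0 hn (d'ge0 _ _) h) _.
    by rewrite hD ezo /ell ezo ezx ezy eqxx add0r.
  exact: (pn_bound3 hn a b (a + b) hxz' hyz' hzo).
have Bdir : forall (S : set T) a b, S o -> S x -> S y ->
    FPbound p d S o [:: (a, x); (b, y)]
      ((`|a| `^ p * d x o `^ p + `|b| `^ p * d y o `^ p) `^ p^-1).
  move=> S a b So Sx Sy V nrm f hn hc fo hL; rewrite sum_mol.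
  apply: (le_powRV p0); first by case: hn.
  have hx' : nrm (f x) `^ p <= d x o `^ p.
    by have := hL x o Sx So; rewrite fo subr0; apply: (pn_lip p0 hn (dge0 _ _)).
  have hy' : nrm (f y) `^ p <= d y o `^ p.
    by have := hL y o Sy So; rewrite fo subr0; apply: (pn_lip p0 hn (dge0 _ _)).
  exact: (pn_bound2 hn a b hx' hy').
have NO : N o by rewrite /N /=; left; left.
have NX : N x by rewrite /N /=; left; right.
have NY : N y by rewrite /N /=; right.
have K1 : forall a b, free_pnorm p d' setT o [:: (a, x); (b, y)] = F a b `^ p^-1.
  move=> a b; apply/eqP; rewrite eq_le (fp_le (Bt a b) (Wt a b)) (fp_ge (Bt a b) (Wt a b)) //.
have K3 : forall a b, F a b `^ p^-1 <= free_pnorm p d N o [:: (a, x); (b, y)].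
  move=> a b; exact: (fp_ge (Bdir N a b NO NX NY) (WtN a b)).
have t1 := dtri x z y; rewrite (dsym z y) in t1.
have t2 := dtri x z o; rewrite (dsym z o) in t2.
have t3 := dtri y z o; rewrite (dsym z o) in t3.
have hA := powR_ge0 (d x z) p.
have hB := powR_ge0 (d y z) p.
have hG := powR_ge0 (d o z) p.
rewrite e1 e3 e5 in t1 t2 t3.
have [sx [sy [s0 [hs1 [hs2 [hs3 [hs4 [hs5 [hs6 [c1 [c2 c3]]]]]]]]]]] :
  exists sx sy s0, 0 <= sx /\ sx <= Lx /\ 0 <= sy /\ sy <= Ly /\ 0 <= s0 /\ s0 <= L0 /\
    sx + sy + s0 <= d o z `^ p /\
    (Lx - sx) + sy + (L0 - s0) <= d x z `^ p /\
    sx + (Ly - sy) + (L0 - s0) <= d y z `^ p.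
  exact: lp_exists.
have w0 : 0 <= Lx - sx by rewrite subr_ge0.
have w2 : 0 <= Ly - sy by rewrite subr_ge0.
have w4 : 0 <= L0 - s0 by rewrite subr_ge0.
have fm_lip : forall u v,
    PhiL p (cutf p x y z [:: Lx - sx; sx; Ly - sy; sy; L0 - s0; s0] u -
            cutf p x y z [:: Lx - sx; sx; Ly - sy; sy; L0 - s0; s0] v)
    <= d u v `^ p.
  move=> u v; rewrite (cut_table p0 hox hoy hoz hxy hxz hyz hall w0 hs1 w2 hs3 w4 hs5).
  case: (hall u) => [->|[->|[->|->]]]; case: (hall v) => [->|[->|[->|->]]];
  rewrite ?eqxx ?eox ?eoy ?eoz ?exo ?exy ?exz ?eyo ?eyx ?eyz ?ezo ?ezx ?ezy;
  rewrite [X in X <= _]/= ?dd ?pz ?e1 ?e2 ?e3 ?e4 ?e5 ?e6 ?(dsym z o) ?(dsym z x) ?(dsym z y);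
  clear -c1 c2 c3 hs1 hs2 hs3 hs4 hs5 hs6 Lx0 Ly0 L00; lra.
have Wm : forall a b, FPset p d setT o [:: (a, x); (b, y)] (F a b `^ p^-1).
  move=> a b.
  have -> : F a b `^ p^-1 = nrmP p (@PhiL _ p 6)
    (\sum_(c <- [:: (a, x); (b, y)]) c.1 *: cutf p x y z [:: Lx - sx; sx; Ly - sy; sy; L0 - s0; s0] c.2).
    rewrite sum_mol /nrmP (cut_value p0 z hxy w0 hs1 w2 hs3 w4 hs5) /F.
    by rewrite !subrK.
  by apply: witness6 => // u v _ _; exact: fm_lip.
have K2 : forall a b, F a b `^ p^-1 <= free_pnorm p d setT o [:: (a, x); (b, y)].
  move=> a b; exact: (fp_ge (Bdir setT a b I I I) (Wm a b)).
have K4 : forall a b, a * b = 0 \/ a = - b ->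
    free_pnorm p d N o [:: (a, x); (b, y)] <= F a b `^ p^-1.
  move=> a b hab; apply: (fp_le _ (WtN a b)).
  move=> V nrm f hn hc fo hL; rewrite sum_mol; apply: (le_powRV p0); first by case: hn.
  have hx' : nrm (f x) `^ p <= Lx + L0.
    by rewrite -e1; have := hL x o NX NO; rewrite fo subr0; apply: (pn_lip p0 hn (dge0 _ _)).
  have hy' : nrm (f y) `^ p <= Ly + L0.
    by rewrite -e3; have := hL y o NY NO; rewrite fo subr0; apply: (pn_lip p0 hn (dge0 _ _)).
  have hxy' : nrm (f x - f y) `^ p <= Lx + Ly.
    by rewrite -e5; apply: (pn_lip p0 hn (dge0 _ _)); apply: hL.
  case: hab => [/eqP|->].
    rewrite mulf_eq0 => /orP[/eqP->|/eqP->].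
      rewrite scale0r add0r (pn_scale hn) /F normr0 pz mul0r !add0r -mulrDr.
      by apply: ler_wpM2l => //; apply: powR_ge0.
    rewrite scale0r addr0 (pn_scale hn) /F normr0 pz mul0r !addr0 -mulrDr.
    by apply: ler_wpM2l => //; apply: powR_ge0.
  have -> : (- b) *: f x + b *: f y = (- b) *: (f x - f y) by rewrite scalerBr !scaleNr opprK.
  rewrite (pn_scale hn) /F addNr normr0 pz mul0r addr0 normrN -mulrDr.
  by apply: ler_wpM2l => //; apply: powR_ge0.
pose f2 (u : T) : 'rV[R]_2 := vec2 (if u == x then 1 else 0) (if u == y then 1 else 0).
have f2o : f2 o = 0 by rewrite /f2 eox eoy vec2_00.
have lip2 : forall u v, N u -> N v -> Phi2 p Lx Ly L0 (f2 u - f2 v) <= d u v `^ p.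
  move=> u v; rewrite /N /= => -[[->|->]|->] [[->|->]|->];
  rewrite /f2 ?eqxx ?exy ?eyx ?eox ?eoy ?exo ?eyo vec2B;
  first [ apply: le_trans (P2le p Lx0 Ly0 L00 _ 0) _;
          rewrite g2_vec2; do 3 rewrite ?subr0 ?sub0r ?subrr ?opprK ?addNr ?addrN ?normrN ?normr1 ?normr0
            ?powR1p ?pz ?mul0r ?mul1r ?addr0 ?add0r ?dd ?pz ?e1 ?e2 ?e3 ?e4 ?e5 ?e6; by []
        | apply: le_trans (P2le p Lx0 Ly0 L00 _ 1) _;
          rewrite g2_vec2; do 3 rewrite ?subr0 ?sub0r ?subrr ?opprK ?addNr ?addrN ?normrN ?normr1 ?normr0
            ?powR1p ?pz ?mul0r ?mul1r ?addr0 ?add0r ?dd ?pz ?e1 ?e2 ?e3 ?e4 ?e5 ?e6; by []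
        | apply: le_trans (P2le p Lx0 Ly0 L00 _ (-1)) _;
          rewrite g2_vec2; do 3 rewrite ?subr0 ?sub0r ?subrr ?opprK ?addNr ?addrN ?normrN ?normr1 ?normr0
            ?powR1p ?pz ?mul0r ?mul1r ?addr0 ?add0r ?dd ?pz ?e1 ?e2 ?e3 ?e4 ?e5 ?e6; by [] ].
have W2 : forall a b, FPset p d N o [:: (a, x); (b, y)]
    (nrmP p (Phi2 p Lx Ly L0) (\sum_(c <- [:: (a, x); (b, y)]) c.1 *: f2 c.2)).
  by move=> a b; apply: witness2.
have K5 : forall a b, a != 0 -> b != 0 -> a + b != 0 ->
    F a b `^ p^-1 < free_pnorm p d N o [:: (a, x); (b, y)].
  move=> a b ha hb hab; apply: lt_le_trans (fp_ge (Bdir N a b NO NX NY) (W2 a b)).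
  have ex2 : f2 x = vec2 1 0 by rewrite /f2 eqxx exy.
  have ey2 : f2 y = vec2 0 1 by rewrite /f2 eqxx eyx.
  rewrite sum_mol ex2 ey2 vec2_comb /nrmP.
  exact: (ltr_powRV p0 (F0 a b) (Phi2_strict p0 p1 Lx0 Ly0 L00 ha hb hab)).
split.
  move=> a b; rewrite K1; exact: K2.
split.
  by move=> a b; rewrite K1 (powRVK p0 (F0 a b)) /F e1 e3 e5; field.
move=> a b; rewrite K1; split.
  move=> E; case: (boolP (a * b == 0)) => [/eqP|hab]; first by left.
  case: (boolP (a == - b)) => [/eqP|hab2]; first by right.
  have ha : a != 0 by apply: contraNneq hab => ->; rewrite mul0r.
  have hb : b != 0 by apply: contraNneq hab => ->; rewrite mulr0.
  have hab3 : a + b != 0 by rewrite addr_eq0.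
  by have := K5 a b ha hb hab3; rewrite -E ltxx.
move=> H; apply/eqP; rewrite eq_le (K3 a b) /=; exact: K4.
Qed.
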